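(* Let $\langle D,E,e,\varepsilon\rangle$ be a restricted Priestley duality between a variety $\mathcal A$ and a category $\mathcal X$. Every morphism $\phi\colon\mathbb X\to\mathbb Y$ in $\mathcal X$ factors in $\mathcal X$ as a $\mathcal P$-surjection $\mu\colon\mathbb X\to\mathbb Z$ followed by a $\mathcal P$-embedding $\psi\colon\mathbb Z\to\mathbb Y$. Given two such factorisations $\mu_1\colon\mathbb X\to\mathbb Z_1$, $\psi_1\colon\mathbb Z_1\to\mathbb Y$ and $\mu_2\colon\mathbb X\to\mathbb Z_2$, $\psi_2\colon\mathbb Z_2\to\mathbb Y$ of $\phi$, there is an isomorphism $\gamma\colon\mathbb Z_1\to\mathbb Z_2$ in $\mathcal X$ with $\gamma\circ\mu_1=\mu_2$ and $\psi_2\circ\gamma=\psi_1$.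
   Context: $\mathcal D$: bounded distributive lattices; $\mathcal P$: Priestley spaces. Priestley duality: $H(\mathbf L)=\mathcal D(\mathbf L,\mathbf 2)$, $K(\mathbb X)=\mathcal P(\mathbb X,\mathbbm 2)$, morphisms by precomposition, unit and counit by evaluation. A restricted Priestley duality $\langle D,E,e,\varepsilon\rangle$: $\mathcal A$ a variety with a term reduct in $\mathcal D$ and forgetful functor ${}^\flat\colon\mathcal A\to\mathcal D$; $\mathcal X$ a category with functor ${}^\flat\colon\mathcal X\to\mathcal P$; $D,E$ a dual equivalence with unit $e$ and counit $\varepsilon$ such that ${}^\flat\circ D=H\circ{}^\flat$, ${}^\flat\circ E=K\circ{}^\flat$, $e_{\mathbf A}^\flat=e_{\mathbf A^\flat}$, $\varepsilon_{\mathbb X}^\flat=\varepsilon_{\mathbb X^\flat}$. A morphism $\phi$ of $\mathcal X$ is a $\mathcal P$-surjection if $\phi^\flat$ is surjective and a $\mathcal P$-embedding if $\phi^\flat$ is an embedding of Priestley spaces. *)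

(* Defs.v *)
From mathcomp Require Import all_boot.
Set Implicit Arguments. Unset Strict Implicit. Unset Printing Implicit Defensive.

Definition cast (T U : Type) (p : T = U) (x : T) : U :=
  match p in _ = U' return U' with erefl => x end.

Record category := Category {
  ob : Type;
  hom : ob -> ob -> Type;
  idm : forall a, hom a a;
  ccomp : forall a b c, hom b c -> hom a b -> hom a c;
  comp_assoc : forall a b c d (h : hom c d) (g : hom b c) (f : hom a b),
      ccomp h (ccomp g f) = ccomp (ccomp h g) f;
  comp_id_l : forall a b (f : hom a b), ccomp (idm b) f = f;
  comp_id_r : forall a b (f : hom a b), ccomp f (idm a) = f }.
Arguments idm {_} a.
Arguments hom : clear implicits.
Arguments ccomp {_ _ _ _} _ _.

Definition is_iso (C : category) (a b : ob C) (f : hom C a b) : Prop :=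
  exists g : hom C b a, ccomp g f = idm a /\ ccomp f g = idm b.

Record pspace := PSpace {
  pcar : Type;
  popen : (pcar -> Prop) -> Prop;
  ple : pcar -> pcar -> Prop;
  popen_full : popen (fun _ => True);
  popen_inter : forall U W, popen U -> popen W -> popen (fun x => U x /\ W x);
  popen_union : forall (I : Type) (F : I -> pcar -> Prop),
      (forall i, popen (F i)) -> popen (fun x => exists i, F i x);
  ple_refl : forall x, ple x x;
  ple_trans : forall x y z, ple x y -> ple y z -> ple x z;
  ple_antisym : forall x y, ple x y -> ple y x -> x = y;
  pcompact : forall (I : Type) (F : I -> pcar -> Prop),
      (forall i, popen (F i)) -> (forall x, exists i, F i x) ->
      exists n (g : 'I_n -> I), forall x, exists k, F (g k) x;
  psep : forall x y, ~ ple x y ->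
      exists U : pcar -> Prop,
        [/\ popen U, popen (fun z => ~ U z),
            (forall z w, U z -> ple z w -> U w), U x & ~ U y] }.
Arguments popen : clear implicits.
Arguments ple : clear implicits.

Definition pcont (X Y : pspace) (f : pcar X -> pcar Y) : Prop :=
  forall U, popen Y U -> popen X (fun x => U (f x)).
Definition pmono (X Y : pspace) (f : pcar X -> pcar Y) : Prop :=
  forall x y, ple X x y -> ple Y (f x) (f y).

Record pmor (X Y : pspace) := PMor {
  pfun : pcar X -> pcar Y;
  pfun_cont : pcont pfun;
  pfun_mono : pmono pfun }.

Definition psurjective (X Y : pspace) (f : pmor X Y) : Prop :=
  forall y, exists x, pfun f x = y.
Definition pembedding (X Y : pspace) (f : pmor X Y) : Prop :=
  (forall x x', ple X x x' <-> ple Y (pfun f x) (pfun f x')) /\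
  (forall U, popen X U -> exists W, popen Y W /\ forall x, U x <-> W (pfun f x)).

Record Pfunctor (C : category) := PFunctor {
  fobj : ob C -> pspace;
  fmap : forall a b, hom C a b -> pmor (fobj a) (fobj b);
  fmap_id : forall a x, pfun (fmap (idm a)) x = x;
  fmap_comp : forall a b c (f : hom C a b) (g : hom C b c) x,
      pfun (fmap (ccomp g f)) x = pfun (fmap g) (pfun (fmap f) x) }.
Arguments fmap {C} p {a b} _.

Definition Psurj (C : category) (F : Pfunctor C) a b (f : hom C a b) : Prop :=
  psurjective (fmap F f).
Definition Pemb (C : category) (F : Pfunctor C) a b (f : hom C a b) : Prop :=
  pembedding (fmap F f).

Definition is_bdl (T : Type) (m j : T -> T -> T) (b t : T) : Prop :=
  (forall x y z, m x (m y z) = m (m x y) z) /\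
  (forall x y z, j x (j y z) = j (j x y) z) /\
  (forall x y, m x y = m y x) /\
  (forall x y, j x y = j y x) /\
  (forall x y, m x (j x y) = x) /\
  (forall x y, j x (m x y) = x) /\
  (forall x y z, m x (j y z) = j (m x y) (m x z)) /\
  (forall x, m x t = x) /\
  (forall x, j x b = x).

Record bdl := BDL {
  lcar : Type;
  lmeet : lcar -> lcar -> lcar;
  ljoin : lcar -> lcar -> lcar;
  lbot : lcar;
  ltop : lcar;
  lax : is_bdl lmeet ljoin lbot ltop }.

Record signature := Signature { sop : Type; sar : sop -> nat }.

Record algebra (S : signature) := Algebra {
  acar : Type;
  aop : forall o : sop S, ('I_(sar o) -> acar) -> acar }.
Arguments aop {S} a o _.

Inductive term (S : signature) (V : Type) : Type :=
  | TVar : V -> term S V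
  | TApp : forall o : sop S, ('I_(sar o) -> term S V) -> term S V.

Fixpoint teval (S : signature) (V : Type) (A : algebra S) (v : V -> acar A)
    (t : term S V) : acar A :=
  match t with
  | TVar x => v x
  | TApp o ts => aop A o (fun i => teval v (ts i))
  end.

Definition models (S : signature) (E : term S nat -> term S nat -> Prop)
    (A : algebra S) : Prop :=
  forall t u, E t u -> forall v : nat -> acar A, teval v t = teval v u.

(* binary term operation: variable [false] is x, [true] is y *)
Definition top2 (S : signature) (A : algebra S) (t : term S bool)
    (x y : acar A) : acar A := teval (fun b : bool => if b then y else x) t.
Definition top0 (S : signature) (A : algebra S) (t : term S Empty_set) : acar A :=
  teval (fun e : Empty_set => match e with end) t.

Arguments top2 {S} A t x y.
Arguments top0 {S} A t.

(* A variety given by equations, with a term reduct in D. *)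
Record variety (S : signature) := Variety {
  veq : term S nat -> term S nat -> Prop;
  tmeet : term S bool;
  tjoin : term S bool;
  tbot : term S Empty_set;
  ttop : term S Empty_set;
  vreduct : forall A : algebra S, models veq A ->
      is_bdl (top2 A tmeet) (top2 A tjoin) (top0 A tbot) (top0 A ttop) }.

Record valg (S : signature) (V : variety S) := VAlg {
  valg_alg :> algebra S;
  valg_mod : models (veq V) valg_alg }.

Definition is_ahom (S : signature) (A B : algebra S) (f : acar A -> acar B) :=
  forall o xs, f (aop A o xs) = aop B o (fun i => f (xs i)).

Arguments is_ahom {S} A B f.

Record ahom (S : signature) (A B : algebra S) := AHom {
  afun : acar A -> acar B;
  afun_hom : is_ahom A B afun }.

Lemma ahom_id_proof (S : signature) (A : algebra S) : is_ahom A A (fun x : acar A => x).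
Proof. by []. Qed.
Definition ahom_id (S : signature) (A : algebra S) : ahom A A :=
  @AHom S A A _ (@ahom_id_proof S A).

Lemma ahom_comp_proof (S : signature) (A B C : algebra S) (g : ahom B C) (f : ahom A B) :
  is_ahom A C (fun x => afun g (afun f x)).
Proof. by move=> o xs; rewrite (afun_hom f) (afun_hom g). Qed.
Definition ahom_comp (S : signature) (A B C : algebra S) (g : ahom B C) (f : ahom A B)
  : ahom A C := @AHom S A C _ (@ahom_comp_proof S A B C g f).

Definition flat (S : signature) (V : variety S) (A : valg V) : bdl :=
  @BDL (acar A) (top2 A (tmeet V)) (top2 A (tjoin V)) (top0 A (tbot V))
       (top0 A (ttop V)) (@vreduct S V A (@valg_mod S V A)).

(* H(L) = D(L, 2): carrier, pointwise order, topology as subspace of 2^L *)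
Definition is_2hom (L : bdl) (h : lcar L -> bool) : Prop :=
  [/\ (forall a b, h (lmeet a b) = h a && h b),
      (forall a b, h (ljoin a b) = h a || h b),
      h (lbot L) = false & h (ltop L) = true].
Definition Hcar (L : bdl) : Type := {h : lcar L -> bool | is_2hom h}.
Definition Hle (L : bdl) (h h' : Hcar L) : Prop :=
  forall a, sval h a = true -> sval h' a = true.
(* open sets of the product topology restricted to H(L) *)
Definition Hopen (L : bdl) (U : Hcar L -> Prop) : Prop :=
  forall h, U h -> exists n (s : 'I_n -> lcar L),
    forall h' : Hcar L, (forall k, sval h' (s k) = sval h (s k)) -> U h'.

(* K(X) = P(X, 2): carrier (continuous order-preserving maps to 2);  *)
(* lattice operations are pointwise.                                   *)
Definition Kcar (X : pspace) : Type :=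
  {f : pcar X -> bool |
     [/\ popen X (fun x => f x = true), popen X (fun x => f x = false) &
         (forall x y, ple X x y -> f x = true -> f y = true)]}.

Record rpd (S : signature) (V : variety S) (C : category) (F : Pfunctor C) := RPD {
  Dob : valg V -> ob C;
  Dmap : forall A B : valg V, ahom A B -> hom C (Dob B) (Dob A);
  Eob : ob C -> valg V;
  Emap : forall x y, hom C x y -> ahom (Eob y) (Eob x);
  Dmap_id : forall A : valg V, Dmap (ahom_id A) = idm (Dob A);
  Dmap_comp : forall (A B B' : valg V) (f : ahom A B) (g : ahom B B'),
      Dmap (ahom_comp g f) = ccomp (Dmap f) (Dmap g);
  Emap_id : forall x a, afun (Emap (idm x)) a = a;
  Emap_comp : forall x y z (f : hom C x y) (g : hom C y z) a,
      afun (Emap (ccomp g f)) a = afun (Emap f) (afun (Emap g) a);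
  unit : forall A : valg V, ahom A (Eob (Dob A));
  unit_iso : forall A : valg V, exists g : ahom (Eob (Dob A)) A,
      (forall a, afun g (afun (unit A) a) = a) /\
      (forall b, afun (unit A) (afun g b) = b);
  unit_nat : forall (A B : valg V) (f : ahom A B) a,
      afun (Emap (Dmap f)) (afun (unit A) a) = afun (unit B) (afun f a);
  counit : forall x, hom C x (Dob (Eob x));
  counit_iso : forall x, is_iso (counit x);
  counit_nat : forall x y (phi : hom C x y),
      ccomp (Dmap (Emap phi)) (counit x) = ccomp (counit y) phi;
  (* flat o D = H o flat *)
  pD : forall A : valg V, pcar (fobj F (Dob A)) = Hcar (flat A);
  pD_le : forall (A : valg V) x y,
      ple _ x y <-> Hle (cast (pD A) x) (cast (pD A) y);
  pD_open : forall (A : valg V) (U : Hcar (flat A) -> Prop),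
      popen _ (fun x => U (cast (pD A) x)) <-> Hopen U;
  pD_map : forall (A B : valg V) (f : ahom A B) x a,
      sval (cast (pD A) (pfun (fmap F (Dmap f)) x)) a
      = sval (cast (pD B) x) (afun f a);
  (* flat o E = K o flat *)
  qE : forall x, lcar (flat (Eob x)) = Kcar (fobj F x);
  qE_meet : forall x a b pt,
      sval (cast (qE x) (lmeet a b)) pt
      = sval (cast (qE x) a) pt && sval (cast (qE x) b) pt;
  qE_join : forall x a b pt,
      sval (cast (qE x) (ljoin a b)) pt
      = sval (cast (qE x) a) pt || sval (cast (qE x) b) pt;
  qE_bot : forall x pt, sval (cast (qE x) (lbot _)) pt = false;
  qE_top : forall x pt, sval (cast (qE x) (ltop _)) pt = true;
  qE_map : forall x y (phi : hom C x y) a pt,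
      sval (cast (qE x) (afun (Emap phi) a)) pt
      = sval (cast (qE y) a) (pfun (fmap F phi) pt);
  (* e_A^flat = e_{A^flat}  (evaluation) *)
  unit_flat : forall (A : valg V) a x,
      sval (cast (qE (Dob A)) (afun (unit A) a)) x = sval (cast (pD A) x) a;
  (* eps_X^flat = eps_{X^flat}  (evaluation) *)
  counit_flat : forall x pt a,
      sval (cast (pD (Eob x)) (pfun (fmap F (counit x)) pt)) a
      = sval (cast (qE x) a) pt }.

(* Main.v *)
Require Import Defs.
From mathcomp Require Import all_boot.
From Stdlib Require Import ProofIrrelevance FunctionalExtensionality PropExtensionality ClassicalEpsilon Classical.
Set Implicit Arguments. Unset Strict Implicit. Unset Printing Implicit Defensive.

Lemma cast_K T U (p : T = U) x : cast (esym p) (cast p x) = x. Proof. by destruct p. Qed.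
Lemma cast_Kv T U (p : T = U) y : cast p (cast (esym p) y) = y. Proof. by destruct p. Qed.
Lemma cast_inj T U (p : T = U) x y : cast p x = cast p y -> x = y. Proof. by destruct p. Qed.

Lemma Hcar_ext (L : bdl) (h h' : Hcar L) : (forall a, sval h a = sval h' a) -> h = h'.
Proof.
case: h => f Hf; case: h' => f' Hf' /= E.
have E' := functional_extensionality _ _ E. subst f'.
by rewrite (proof_irrelevance _ Hf Hf').
Qed.

Lemma Kcar_ext (X : pspace) (h h' : Kcar X) : (forall a, sval h a = sval h' a) -> h = h'.
Proof.
case: h => f Hf; case: h' => f' Hf' /= E.
have E' := functional_extensionality _ _ E. subst f'.
by rewrite (proof_irrelevance _ Hf Hf').
Qed.

Lemma ahom_ext (S : signature) (A B : algebra S) (f g : ahom A B) :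
  (forall a, afun f a = afun g a) -> f = g.
Proof.
case: f => f Hf; case: g => g Hg /= E.
have E' := functional_extensionality _ _ E. subst g.
by rewrite (proof_irrelevance _ Hf Hg).
Qed.

Section Main.
Variables (S : signature) (V : variety S) (C : category) (F : Pfunctor C) (R : rpd V F).

Definition cinv (x : ob C) : hom C (Dob R (Eob R x)) x :=
  proj1_sig (constructive_indefinite_description _ (counit_iso R x)).
Lemma cinv_l x : ccomp (cinv x) (counit R x) = idm x.
Proof. rewrite /cinv; case: constructive_indefinite_description => g [] //. Qed.
Lemma cinv_r x : ccomp (counit R x) (cinv x) = idm _.
Proof. rewrite /cinv; case: constructive_indefinite_description => g [] //. Qed.

Lemma phi_repr (x y : ob C) (phi : hom C x y) :
  ccomp (cinv y) (ccomp (Dmap R (Emap R phi)) (counit R x)) = phi.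
Proof. by rewrite counit_nat comp_assoc cinv_l comp_id_l. Qed.

Definition Kf x (a : acar (Eob R x)) : pcar (fobj F x) -> bool := sval (cast (qE R x) a).

Lemma Kinj x (a b : acar (Eob R x)) : (forall pt, Kf a pt = Kf b pt) -> a = b.
Proof. move=> E; have := @cast_inj _ _ (qE R x) a b; apply; exact: Kcar_ext. Qed.

Lemma Emap_inj x z (mu : hom C x z) : Psurj F mu -> injective (afun (Emap R mu)).
Proof.
move=> Hs a b E; apply: Kinj => pt; have [w <-] := Hs pt.
by rewrite /Kf -!qE_map E.
Qed.

Lemma pemb_inj (X Y : pspace) (f : pmor X Y) : pembedding f ->
  forall a b, pfun f a = pfun f b -> a = b.
Proof.
move=> [Ho _] a b E; apply: ple_antisym; apply/Ho; rewrite E; exact: ple_refl.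
Qed.

Lemma transfer x z1 z2 y (mu1 : hom C x z1) (psi1 : hom C z1 y)
  (mu2 : hom C x z2) (psi2 : hom C z2 y) :
  Pemb F psi1 -> Psurj F mu2 ->
  (forall w, pfun (fmap F psi1) (pfun (fmap F mu1) w)
           = pfun (fmap F psi2) (pfun (fmap F mu2) w)) ->
  exists g : ahom (Eob R z1) (Eob R z2),
    forall a, afun (Emap R mu2) (afun g a) = afun (Emap R mu1) a.
Proof.
move=> He Hs Hc.
pose pre z := proj1_sig (constructive_indefinite_description _ (Hs z)).
have preP z : pfun (fmap F mu2) (pre z) = z.
  by rewrite /pre; case: constructive_indefinite_description.
have key w : pfun (fmap F mu1) (pre (pfun (fmap F mu2) w)) = pfun (fmap F mu1) w.
  apply: (pemb_inj He); by rewrite !Hc preP.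
have kP (f1 : Kcar (fobj F z1)) :
  let f2 := fun z => sval f1 (pfun (fmap F mu1) (pre z)) in
  [/\ popen _ (fun z => f2 z = true), popen _ (fun z => f2 z = false) &
      (forall a b, ple _ a b -> f2 a = true -> f2 b = true)].
  case: f1 => f1 [Ht Hf Hm] /=; split.
  - have [W [HW EW]] := He.2 _ Ht.
    have -> : (fun z => f1 (pfun (fmap F mu1) (pre z)) = true) =
              (fun z => W (pfun (fmap F psi2) z)).
      apply: functional_extensionality => z; apply: propositional_extensionality.
      by rewrite EW Hc preP.
    exact: (pfun_cont (fmap F psi2) HW).
  - have [W [HW EW]] := He.2 _ Hf.
    have -> : (fun z => f1 (pfun (fmap F mu1) (pre z)) = false) =
              (fun z => W (pfun (fmap F psi2) z)).
      apply: functional_extensionality => z; apply: propositional_extensionality.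
      by rewrite EW Hc preP.
    exact: (pfun_cont (fmap F psi2) HW).
  - move=> a b Hab; apply: Hm; apply/(He.1); rewrite !Hc !preP.
    exact: pfun_mono.
pose k (f1 : Kcar (fobj F z1)) : Kcar (fobj F z2) := exist _ _ (kP f1).
pose g0 a := cast (esym (qE R z2)) (k (cast (qE R z1) a)).
have g0P a : afun (Emap R mu2) (g0 a) = afun (Emap R mu1) a.
  apply: Kinj => pt; rewrite /Kf !qE_map /g0 cast_Kv /= key; done.
have g0hom : is_ahom (Eob R z1) (Eob R z2) g0.
  move=> o xs; apply: (Emap_inj Hs).
  rewrite g0P !afun_hom; congr aop; apply: functional_extensionality => i.
  by rewrite g0P.
by exists (AHom g0hom).
Qed.


Lemma fcomp_pt a b c (f : hom C a b) (g : hom C b c) (h : hom C a c) :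
  ccomp g f = h -> forall w, pfun (fmap F g) (pfun (fmap F f) w) = pfun (fmap F h) w.
Proof. by move=> <- w; rewrite fmap_comp. Qed.

Lemma uniq_part (x y : ob C) (phi : hom C x y)
          (z1 : ob C) (mu1 : hom C x z1) (psi1 : hom C z1 y)
          (z2 : ob C) (mu2 : hom C x z2) (psi2 : hom C z2 y) :
     ccomp psi1 mu1 = phi -> Psurj F mu1 -> Pemb F psi1 ->
     ccomp psi2 mu2 = phi -> Psurj F mu2 -> Pemb F psi2 ->
     exists gamma : hom C z1 z2,
       is_iso gamma /\ ccomp gamma mu1 = mu2 /\ ccomp psi2 gamma = psi1.
Proof.
move=> E1 S1 P1 E2 S2 P2.
have Hc w : pfun (fmap F psi1) (pfun (fmap F mu1) w)
           = pfun (fmap F psi2) (pfun (fmap F mu2) w).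
  by rewrite (fcomp_pt E1) (fcomp_pt E2).
have [g12 G12] := transfer P1 S2 Hc.
have [g21 G21] := transfer P2 S1 (fun w => esym (Hc w)).
have A1 : ahom_comp (Emap R mu1) g21 = Emap R mu2 by apply: ahom_ext => a /=.
have A2 : ahom_comp (Emap R mu2) g12 = Emap R mu1 by apply: ahom_ext => a /=.
have B1 : ahom_comp g21 (Emap R psi2) = Emap R psi1.
  apply: ahom_ext => a /=; apply: (Emap_inj S1).
  by rewrite G21 -!Emap_comp E1 E2.
have I1 : ahom_comp g21 g12 = ahom_id (Eob R z1).
  by apply: ahom_ext => a /=; apply: (Emap_inj S1); rewrite G21 G12.
have I2 : ahom_comp g12 g21 = ahom_id (Eob R z2).
  by apply: ahom_ext => a /=; apply: (Emap_inj S2); rewrite G12 G21.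
exists (ccomp (cinv z2) (ccomp (Dmap R g21) (counit R z1))); split; [|split].
- exists (ccomp (cinv z1) (ccomp (Dmap R g12) (counit R z2))); split.
  + rewrite -!comp_assoc (comp_assoc (counit R z2) (cinv z2)) cinv_r comp_id_l.
    by rewrite (comp_assoc (Dmap R g12)) -Dmap_comp I1 Dmap_id comp_id_l cinv_l.
  + rewrite -!comp_assoc (comp_assoc (counit R z1) (cinv z1)) cinv_r comp_id_l.
    by rewrite (comp_assoc (Dmap R g21)) -Dmap_comp I2 Dmap_id comp_id_l cinv_l.
- rewrite -!comp_assoc -counit_nat (comp_assoc (Dmap R g21)) -Dmap_comp A1 counit_nat.
  by rewrite comp_assoc cinv_l comp_id_l.
- rewrite -{1}(phi_repr psi2) -!comp_assoc (comp_assoc (counit R z2) (cinv z2)) cinv_r.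
  by rewrite comp_id_l (comp_assoc (Dmap R (Emap R psi2))) -Dmap_comp B1 phi_repr.
Qed.


Section Exist.
Variables (x y : ob C) (phi : hom C x y).

Definition Bcar := {a : acar (Eob R x) | exists b : acar (Eob R y), afun (Emap R phi) b = a}.
Definition pre (a : Bcar) : acar (Eob R y) :=
  proj1_sig (constructive_indefinite_description _ (proj2_sig a)).
Lemma preP a : afun (Emap R phi) (pre a) = sval a.
Proof. by rewrite /pre; case: constructive_indefinite_description. Qed.

Lemma Bext (a b : Bcar) : sval a = sval b -> a = b.
Proof.
case: a => a Ha; case: b => b Hb /= E; subst b.
by rewrite (proof_irrelevance _ Ha Hb).
Qed.

Definition Bop (o : sop S) (xs : 'I_(sar o) -> Bcar) : Bcar :=
  exist _ (afun (Emap R phi) (aop (Eob R y) o (fun i => pre (xs i)))) (ex_intro _ _ erefl).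

Lemma BopE o xs : sval (Bop xs) = aop (Eob R x) o (fun i => sval (xs i)).
Proof.
rewrite /= afun_hom; congr aop; apply: functional_extensionality => i; exact: preP.
Qed.

Definition Balg : algebra S := @Algebra S Bcar Bop.

Lemma Bteval (W : Type) (v : W -> Bcar) (t : term S W) :
  sval (@teval S W Balg v t) = teval (fun n => sval (v n)) t.
Proof.
elim: t => [w|o ts IH] //.
transitivity (aop (Eob R x) o (fun i => sval (@teval S W Balg v (ts i)))); first exact: BopE.
rewrite /=; congr aop; apply: functional_extensionality => i; exact: IH.
Qed.

Lemma Bmod : models (veq V) Balg.
Proof.
move=> t u E v; apply: Bext; rewrite !Bteval. exact: (@valg_mod S V (Eob R x) t u E (fun n => sval (v n))).
Qed.

Definition B : valg V := @VAlg S V Balg Bmod.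

Lemma incl_hom : is_ahom B (Eob R x) (fun a : Bcar => sval a).
Proof. move=> o xs; exact: BopE. Qed.
Definition incl : ahom B (Eob R x) := AHom incl_hom.

Definition qf (b : acar (Eob R y)) : Bcar :=
  exist _ (afun (Emap R phi) b) (ex_intro _ b erefl).
Lemma q_hom : is_ahom (Eob R y) B qf.
Proof. move=> o xs; apply: Bext; by rewrite BopE /= afun_hom. Qed.
Definition q : ahom (Eob R y) B := AHom q_hom.

Lemma qpre a : qf (pre a) = a.
Proof. apply: Bext; exact: preP. Qed.


Lemma BmeetK (a b : Bcar) w :
  Kf (sval (@lmeet (flat B) a b)) w = Kf (sval a) w && Kf (sval b) w.
Proof.
have -> : sval (@lmeet (flat B) a b) = @lmeet (flat (Eob R x)) (sval a) (sval b).
  rewrite /= /top2 Bteval; congr teval; apply: functional_extensionality; by case.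
exact: qE_meet.
Qed.

Lemma BjoinK (a b : Bcar) w :
  Kf (sval (@ljoin (flat B) a b)) w = Kf (sval a) w || Kf (sval b) w.
Proof.
have -> : sval (@ljoin (flat B) a b) = @ljoin (flat (Eob R x)) (sval a) (sval b).
  rewrite /= /top2 Bteval; congr teval; apply: functional_extensionality; by case.
exact: qE_join.
Qed.

Lemma exists_pt (h : Hcar (flat B)) : exists w, forall a : Bcar, sval h a = Kf (sval a) w.
Proof.
case: (svalP h) => hm hj hb ht.
apply: NNPP => Hn.
have Hcov : forall w, exists a : Bcar, Kf (sval a) w = ~~ sval h a.
  move=> w; apply: NNPP => Hn2; apply: Hn; exists w => a; apply: NNPP => Hne.
  apply: Hn2; exists a; move: Hne; by case: (sval h a); case: (Kf _ w).
have Hop : forall a : Bcar, popen _ (fun w => Kf (sval a) w = ~~ sval h a).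
  move=> a; rewrite /Kf; case: (svalP (cast (qE R x) (sval a))) => Ht Hf _.
  by case: (sval h a).
have [n [g Hg]] := pcompact Hop Hcov.
have fin : forall n (g : 'I_n -> Bcar), exists m j : Bcar,
   [/\ sval h m = true, sval h j = false,
    (forall w, Kf (sval m) w = true -> forall k, sval h (g k) = true -> Kf (sval (g k)) w = true)
    & (forall w k, sval h (g k) = false -> Kf (sval (g k)) w = true -> Kf (sval j) w = true)].
  elim=> [|n0 IH] g0.
    by exists (ltop (flat B)), (lbot (flat B)); split => //; [move=> w _ [] | move=> w []].
  have [m [j [hmT hjF Pm Pj]]] := IH (fun k => g0 (lift ord0 k)).
  case Hg0: (sval h (g0 ord0)).
    exists (@lmeet (flat B) m (g0 ord0)), j; split => //.
    - by rewrite hm hmT Hg0.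
    - move=> w; rewrite BmeetK => /andP [Hw1 Hw2] k.
      case: (unliftP ord0 k) => [k' ->|->] //; exact: Pm.
    - move=> w k; case: (unliftP ord0 k) => [k' ->|->]; [exact: Pj | by rewrite Hg0].
  exists m, (@ljoin (flat B) j (g0 ord0)); split => //.
  - by rewrite hj hjF Hg0.
  - move=> w Hw k; case: (unliftP ord0 k) => [k' ->|->]; [exact: Pm | by rewrite Hg0].
  - move=> w k; rewrite BjoinK; case: (unliftP ord0 k) => [k' ->|->] => H1 H2; apply/orP.
      by left; exact: Pj H1 H2.
    by right.
have [m [j [hmT hjF Pm Pj]]] := fin n g.
have Hmj : @lmeet (flat B) m j = m.
  apply: Bext; apply: Kinj => w; rewrite BmeetK.
  case Hw: (Kf (sval m) w) => //=.
  have [k Hk] := Hg w.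
  case Hhk: (sval h (g k)) in Hk.
    by rewrite (Pm w Hw k Hhk) in Hk.
  exact: Pj w k Hhk Hk.
by have := hm m j; rewrite Hmj hmT hjF.
Qed.

Definition mu := ccomp (Dmap R incl) (counit R x).
Definition psi := ccomp (cinv y) (Dmap R q).

Lemma fact_eq : ccomp psi mu = phi.
Proof.
rewrite /psi /mu -comp_assoc (comp_assoc (Dmap R q)) -Dmap_comp.
have -> : ahom_comp incl q = Emap R phi by apply: ahom_ext.
exact: phi_repr.
Qed.

Lemma mu_surj : Psurj F mu.
Proof.
move=> z; have [w Hw] := exists_pt (cast (pD R B) z).
exists w; rewrite /mu fmap_comp.
have := @cast_inj _ _ (pD R B) (pfun (fmap F (Dmap R incl)) (pfun (fmap F (counit R x)) w)) z.
apply; apply: Hcar_ext => a.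
rewrite pD_map /= counit_flat Hw //.
Qed.

Lemma psi_emb : Pemb F psi.
Proof.
pose Dq z := pfun (fmap F (Dmap R q)) z.
have Hpsi z : pfun (fmap F psi) z = pfun (fmap F (cinv y)) (Dq z) by rewrite /psi fmap_comp.
have back v : pfun (fmap F (counit R y)) (pfun (fmap F (cinv y)) v) = v.
  by rewrite -fmap_comp cinv_r fmap_id.
have Dqv z a : sval (cast (pD R (Eob R y)) (Dq z)) (pre a) = sval (cast (pD R B) z) a.
  by rewrite /Dq pD_map /= qpre.
split.
  move=> z z'; split; first exact: pfun_mono.
  rewrite !Hpsi => Hle.
  have Hle2 : ple _ (Dq z) (Dq z').
    rewrite -(back (Dq z)) -(back (Dq z')); exact: pfun_mono.
  apply/(pD_le z z') => a Ha.
  have := (pD_le (Dq z) (Dq z')).1 Hle2 (pre a); rewrite !Dqv; exact.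
move=> U HU.
pose U0 (h : Hcar (flat B)) := U (cast (esym (pD R B)) h).
have HU0 : Hopen U0.
  apply/(pD_open R U0).
  have -> : (fun z => U0 (cast (pD R B) z)) = U.
    by apply: functional_extensionality => z; rewrite /U0 cast_K.
  exact: HU.
pose W' (hh : Hcar (flat (Eob R y))) := exists h : Hcar (flat B), U0 h /\
  exists n (s : 'I_n -> Bcar),
    (forall h' : Hcar (flat B), (forall k, sval h' (s k) = sval h (s k)) -> U0 h') /\
    forall k, sval hh (pre (s k)) = sval h (s k).
have HW' : Hopen W'.
  move=> hh [h [Uh [n [s [Ps Ag]]]]].
  exists n, (fun k => pre (s k)) => hh' Ag'.
  exists h; split => //; exists n, s; split => // k.
  by rewrite Ag' Ag.
exists (fun w => W' (cast (pD R (Eob R y)) (pfun (fmap F (counit R y)) w))); split.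
  exact: (pfun_cont (fmap F (counit R y)) ((pD_open R W').2 HW')).
move=> z; rewrite Hpsi back; split.
  move=> Uz.
  have U0z : U0 (cast (pD R B) z) by rewrite /U0 cast_K.
  have [n [s Ps]] := HU0 _ U0z.
  exists (cast (pD R B) z); split => //; exists n, s; split => // k.
move=> [h [Uh [n [s [Ps Ag]]]]].
have : U0 (cast (pD R B) z).
  apply: Ps => k; by rewrite -Dqv Ag.
by rewrite /U0 cast_K.
Qed.

End Exist.

End Main.

Theorem lemma2p9 (S : signature) (V : variety S) (C : category) (F : Pfunctor C)
    (R : rpd V F) :
  (forall (x y : ob C) (phi : hom C x y),
     exists (z : ob C) (mu : hom C x z) (psi : hom C z y),
       ccomp psi mu = phi /\ Psurj F mu /\ Pemb F psi) /\
  (forall (x y : ob C) (phi : hom C x y)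
          (z1 : ob C) (mu1 : hom C x z1) (psi1 : hom C z1 y)
          (z2 : ob C) (mu2 : hom C x z2) (psi2 : hom C z2 y),
     ccomp psi1 mu1 = phi -> Psurj F mu1 -> Pemb F psi1 ->
     ccomp psi2 mu2 = phi -> Psurj F mu2 -> Pemb F psi2 ->
     exists gamma : hom C z1 z2,
       is_iso gamma /\ ccomp gamma mu1 = mu2 /\ ccomp psi2 gamma = psi1).
Proof.
split; last by move=> *; apply: (uniq_part R); eassumption.
move=> x y phi.
exists (Dob R (B R phi)), (mu R phi), (psi R phi); split; [exact: fact_eq | split].
  exact: mu_surj.
exact: psi_emb.
Qed.
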